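(* Let $G=(V,E)$ be a finite simple graph whose vertices operate independently, vertex $v$ with probability $p_v$, and let $q_v=1-p_v$, $\mathbf{p}=(p_v)_{v\in V}\in[0,1]^V$. Then \[ \operatorname{DRel}(G,\mathbf{p})=\sum_{J\subseteq V}(-1)^{|J|}\prod_{v\in N_G[J]}q_v. \] Moreover, if $G$ has no isolated vertices, then for any linear ordering of $V$ and any set $\mathscr{X}$ of broken neighbourhoods of $G$, \[ \operatorname{DRel}(G,\mathbf{p})=\sum_{\substack{J\subseteq V\\ J\not\supseteq X\ \forall X\in\mathscr{X}}}(-1)^{|J|}\prod_{v\in N_G[J]}q_v. \]
   Context: $\operatorname{DRel}(G,\mathbf{p})$ is the probability that the set of operating vertices is a dominating set of $G$ (every vertex not in the set is adjacent to a vertex in it); edges never fail. $N_G[J]$ is the closed neighbourhood of $J$ (vertices in $J$ or adjacent to a vertex of $J$), $N_G[v]=N_G[\{v\}]$. Given a linear ordering of $V$, a broken neighbourhood of $G$ is a set $N_G[v]\setminus\{v\}$ for a vertex $v$ with $v=\max N_G[v]$. *)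

(* Defs.v *)
From mathcomp Require Import all_boot all_order all_algebra.
Set Implicit Arguments. Unset Strict Implicit. Unset Printing Implicit Defensive.
Import Order.TTheory GRing.Theory Num.Theory.
Local Open Scope ring_scope.

Definition simple_graph (T : finType) (e : rel T) : Prop :=
  symmetric e /\ irreflexive e.

Definition cnbh (T : finType) (e : rel T) (J : {set T}) : {set T} :=
  [set x | (x \in J) || [exists y in J, e y x]].

Definition cnbh1 (T : finType) (e : rel T) (v : T) : {set T} := cnbh e [set v].

Definition dominating (T : finType) (e : rel T) (S : {set T}) : bool :=
  [forall x, (x \notin S) ==> [exists y in S, e x y]].

Definition DRel (R : numDomainType) (T : finType) (e : rel T) (p : T -> R) : R :=
  \sum_(S : {set T} | dominating e S)
     (\prod_(v in S) p v) * (\prod_(v in ~: S) (1 - p v)).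

Definition no_isolated (T : finType) (e : rel T) : Prop :=
  forall v : T, exists u : T, e v u.

Definition strict_linear_order (T : finType) (lt : rel T) : Prop :=
  irreflexive lt /\ transitive lt /\ (forall x y, x != y -> lt x y || lt y x).

Definition is_max_of (T : finType) (lt : rel T) (v : T) (A : {set T}) : bool :=
  (v \in A) && [forall u in A, (u == v) || lt u v].

Definition broken_nbh (T : finType) (e : rel T) (lt : rel T) (X : {set T}) : Prop :=
  exists v : T, is_max_of lt v (cnbh1 e v) /\ X = cnbh1 e v :\ v.

(* Main.v *)
Require Import Defs.
From mathcomp Require Import all_boot all_order all_algebra.
Import Order.TTheory GRing.Theory Num.Theory.
Local Open Scope ring_scope.

Section Aux.
Variable (R : realFieldType) (T : finType) (e : rel T) (p : T -> R).

Lemma toggle0 (P : pred {set T}) (f : {set T} -> R) (v : T) :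
  (forall J : {set T}, v \notin J -> P (v |: J) = P J) ->
  (forall J : {set T}, v \notin J -> P J -> f (v |: J) = - f J) ->
  \sum_(J | P J) f J = 0.
Proof.
move=> HP Hf.
rewrite (bigID (fun J : {set T} => v \in J)) /=.
rewrite (reindex_onto (fun J : {set T} => v |: J) (fun J : {set T} => J :\ v)) /=; last first.
  by move=> J /andP[_ vJ]; rewrite setD1K.
have E : forall J : {set T}, ((v |: J) :\ v == J) = (v \notin J).
  move=> J; apply/eqP/idP => [<-|/setU1K//]; by rewrite setD11.
rewrite (eq_bigl (fun J : {set T} => P J && (v \notin J))); last first.
  move=> J; rewrite setU11 andbT E; case vJ: (v \in J) => /=; first by rewrite !andbF.
  by rewrite !andbT HP ?vJ.
rewrite -big_split /= big1 // => J /andP[PJ vJ].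
by rewrite Hf // addNr.
Qed.

Lemma in_cnbh (J : {set T}) x : (x \in cnbh e J) = (x \in J) || [exists y in J, e y x].
Proof. by rewrite inE. Qed.

Lemma in_cnbh1 v x : (x \in cnbh1 e v) = (x == v) || e v x.
Proof.
rewrite /cnbh1 in_cnbh in_set1; congr orb.
apply/existsP/idP => [[y /andP[/set1P -> ]]//|h].
by exists v; rewrite in_set1 eqxx.
Qed.

Lemma cnbhU1 v (J : {set T}) : cnbh e (v |: J) = cnbh1 e v :|: cnbh e J.
Proof.
apply/setP => x; rewrite in_setU in_cnbh1 !in_cnbh in_setU1.
apply/idP/idP.
  case/orP => [/orP[->//|->]|/existsP[y /andP[]]]; first by rewrite !orbT.
  rewrite in_setU1 => /orP[/eqP ->|yJ] eyx; first by rewrite eyx orbT.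
  by apply/orP; right; apply/orP; right; apply/existsP; exists y; rewrite yJ.
case/orP => [/orP[->//|evx]|/orP[->|/existsP[y /andP[yJ eyx]]]]; rewrite ?orbT //.
  by apply/orP; right; apply/existsP; exists v; rewrite setU11.
by apply/orP; right; apply/existsP; exists y; rewrite in_setU1 yJ orbT.
Qed.

Definition Pf (S : {set T}) := \prod_v (if v \in S then p v else 1 - p v).

Lemma Pf_eq (S : {set T}) : \prod_(v in S) p v * \prod_(v in ~: S) (1 - p v) = Pf S.
Proof.
rewrite /Pf [RHS](bigID (mem S)) /=; congr (_ * _).
  by apply: eq_big => // v /= ->.
by apply: eq_big => [v|v]; rewrite ?in_setC // => /negbTE ->.
Qed.

Lemma LemA (A : {set T}) :
  \prod_(v in A) (1 - p v) = \sum_(S : {set T} | [disjoint S & A]) Pf S.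
Proof.
transitivity (\prod_v ((if v \in A then 0 else p v) + (1 - p v))).
  rewrite big_mkcond /=; apply: eq_bigr => v _.
  by case: ifP => _; rewrite ?add0r // addrC subrK.
rewrite bigA_distr [RHS]big_mkcond /=; apply: eq_big => // J _.
case: ifP => dis.
  apply: eq_bigr => i _; case: ifP => // iJ.
  by rewrite (disjointFr dis iJ).
have [i /andP[/= iJ iA]] : exists i, (i \in J) && (i \in A).
  by move/negbT: dis => /pred0Pn.
by rewrite (bigD1 i) //= iJ iA mul0r.
Qed.


Lemma inner (S : {set T}) : simple_graph e ->
  \sum_(J : {set T} | [disjoint S & cnbh e J]) (-1) ^+ #|J| =
  if dominating e S then (1 : R) else 0.
Proof.
move=> [esym eirr].
case: ifP => dom.
  rewrite (eq_bigl (pred1 set0)); first by rewrite big_pred1_eq cards0 expr0.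
  move=> J /=; apply/idP/idP; last by move/eqP ->; rewrite disjoint_sym; apply: eq_disjoint0 => x; rewrite in_cnbh in_set0 /=; apply/existsP => -[y]; rewrite in_set0.
  move=> dis; apply/eqP/setP => x; rewrite in_set0; apply/negbTE/negP => xJ.
  case xS: (x \in S).
    by move: (disjointFr dis xS); rewrite in_cnbh xJ.
  move/forallP: dom => /(_ x); rewrite xS /= => /existsP [y /andP[yS exy]].
  move: (disjointFr dis yS); rewrite in_cnbh => /norP [_ /negP []].
  by apply/existsP; exists x; rewrite xJ.
move/negbT: dom; rewrite negb_forall => /existsP [x].
rewrite negb_imply => /andP[xS /existsPn nex].
apply: (@toggle0 _ _ x) => J xJ.
  rewrite cnbhU1; apply/idP/idP => dis.
    exact: disjointWr (subsetUr _ _) dis.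
  apply/pred0P => y /=; rewrite in_setU in_cnbh1.
  case yS: (y \in S) => //=; rewrite (disjointFr dis yS) orbF.
  case: eqP => [yx|_]; first by move: xS; rewrite -yx yS.
  by move: (nex y); rewrite yS => /negbTE.
by rewrite cardsU1 xJ exprS mulN1r.
Qed.


Lemma part1 : simple_graph e ->
  DRel e p = \sum_(J : {set T}) (-1) ^+ #|J| * \prod_(v in cnbh e J) (1 - p v).
Proof.
move=> sg.
under eq_bigr => J _ do rewrite LemA mulr_sumr big_mkcond /=.
rewrite exchange_big /= /DRel [LHS]big_mkcond /=; apply: eq_bigr => S _.
rewrite -big_mkcond /= -mulr_suml inner // Pf_eq.
by case: ifP => _; rewrite ?mul1r ?mul0r.
Qed.


Definition F (J : {set T}) := (-1) ^+ #|J| * \prod_(v in cnbh e J) (1 - p v).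

Lemma cnbh_absorb v (J : {set T}) : simple_graph e -> no_isolated e ->
  (cnbh1 e v :\ v) \subset J -> cnbh e (v |: J) = cnbh e J.
Proof.
move=> [esym eirr] noi /subsetP sub.
rewrite cnbhU1; apply/setUidPr/subsetP => y; rewrite in_cnbh1.
case: eqP => [->|yv] /=.
  case: (noi v) => u evu.
  have uJ : u \in J.
    apply: sub; rewrite in_setD1 in_cnbh1 evu orbT andbT.
    by apply/eqP => uv; move: evu; rewrite uv eirr.
  by rewrite in_cnbh => _; apply/orP; right; apply/existsP; exists u; rewrite uJ esym.
move=> evy; rewrite in_cnbh sub //; rewrite in_setD1 in_cnbh1 evy orbT andbT.
by apply/eqP.
Qed.

Lemma sub_U1 (Y J : {set T}) v : v \notin Y -> (Y \subset v |: J) = (Y \subset J).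
Proof.
move=> vY; apply/idP/idP => /subsetP H; apply/subsetP => y Hy.
  move: (H y Hy); rewrite in_setU1; case/orP => // /eqP yv.
  by move: vY; rewrite -yv Hy.
by rewrite in_setU1 H // orbT.
Qed.

Definition good (XX : {set {set T}}) (J : {set T}) := [forall X in XX, ~~ (X \subset J)].

Lemma goodD1 (XX : {set {set T}}) (X J : {set T}) : X \in XX -> good XX J = good (XX :\ X) J && ~~ (X \subset J).
Proof.
move=> XXX; apply/idP/idP.
  move/forall_inP => H; apply/andP; split; last exact: H.
  by apply/forall_inP => Y /setD1P [_ HY]; exact: H.
case/andP => /forall_inP H HX; apply/forall_inP => Y HY.
case: (eqVneq Y X) => [->//|ne]; apply: H; by rewrite in_setD1 ne HY.
Qed.

Definition rank (lt : rel T) (u : T) := #|[set y | lt y u]|.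

Lemma rank_lt (lt : rel T) (u w : T) : strict_linear_order lt -> lt u w -> (rank lt u < rank lt w)%N.
Proof.
move=> [ir [tr _]] luw; apply: proper_card; apply/properP; split.
  by apply/subsetP => y; rewrite !inE => lyu; apply: tr luw.
by exists u; rewrite !inE ?luw ?ir.
Qed.


Lemma good0 (J : {set T}) : good set0 J.
Proof. by apply/forall_inP => X; rewrite in_set0. Qed.

Lemma part2_gen (lt : rel T) : simple_graph e -> no_isolated e -> strict_linear_order lt ->
  forall n (XX : {set {set T}}), (#|XX| <= n)%N ->
  (forall X, X \in XX -> broken_nbh e lt X) ->
  \sum_(J | good XX J) F J = \sum_J F J.
Proof.
move=> sg noi slo n; elim: n => [|n IH] XX.
  rewrite leqn0 cards_eq0 => /eqP -> _.
  by apply: eq_bigl => J; rewrite good0.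
move=> cXX br.
case: (set_0Vmem XX) => [->|[X0 X0in]].
  by apply: eq_bigl => J; rewrite good0.
pose W := [set w | is_max_of lt w (cnbh1 e w) && ((cnbh1 e w :\ w) \in XX)].
have [w0 [mw0 eX0]] := br X0 X0in.
have w0W : w0 \in W by rewrite inE mw0 -eX0 X0in.
case: (@arg_maxnP T w0 (mem W) (rank lt) w0W) => v vW vmax.
move: vW => vW; have : v \in W := vW; rewrite inE => /andP[mv XvXX].
set X := cnbh1 e v :\ v.
have vnot : forall Y, Y \in XX -> v \notin Y.
  move=> Y YXX; have [w [mw eY]] := br Y YXX.
  apply/negP; rewrite eY in_setD1 => /andP[vw vNw].
  have lvw : lt v w.
    by move: mw; rewrite /is_max_of => /andP[_ /forall_inP /(_ v vNw)]; rewrite (negbTE vw).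
  have: (rank lt w <= rank lt v)%N by apply: vmax; change (w \in W); rewrite inE mw -eY YXX.
  by rewrite leqNgt (rank_lt _ _ _ slo lvw).
have vnot' : forall Y, Y \in XX :\ X -> v \notin Y by move=> Y /setD1P[_ /vnot].
rewrite (eq_bigl (fun J => good (XX :\ X) J && ~~ (X \subset J))); last first.
  by move=> J; rewrite (goodD1 _ _ _ XvXX).
rewrite -(IH (XX :\ X)); last 2 first.
- by move: cXX; rewrite (cardsD1 X XX) XvXX.
- by move=> Y /setD1P [_ /br].
rewrite [RHS](bigID (fun J : {set T} => X \subset J)) /=.
have Z : \sum_(J | good (XX :\ X) J && (X \subset J)) F J = 0.
  apply: (@toggle0 _ _ v) => J vJ.
    rewrite sub_U1 ?setD11 //; congr andb.
    by apply/forall_inP/forall_inP => H Y HY; have := H Y HY; rewrite sub_U1 // vnot'.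
  move=> /andP[_ XJ].
  by rewrite /F cnbh_absorb // cardsU1 vJ exprS mulN1r mulNr.
by rewrite Z add0r.
Qed.

End Aux.

Theorem theorem4 (R : realFieldType) (T : finType) (e : rel T) (p : T -> R) :
  simple_graph e ->
  (forall v, 0 <= p v <= 1) ->
  (DRel e p = \sum_(J : {set T}) (-1) ^+ #|J| * \prod_(v in cnbh e J) (1 - p v))
  /\
  (no_isolated e ->
   forall (lt : rel T) (XX : {set {set T}}),
     strict_linear_order lt ->
     (forall X, X \in XX -> broken_nbh e lt X) ->
     DRel e p =
       \sum_(J : {set T} | [forall X in XX, ~~ (X \subset J)])
          (-1) ^+ #|J| * \prod_(v in cnbh e J) (1 - p v)).
Proof.
move=> sg _; split; first exact: part1.
move=> noi lt XX slo br.
rewrite part1 //.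
exact: (esym (part2_gen R T e p lt sg noi slo _ XX (leqnn #|XX|) br)).
Qed.
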